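(* Consider the WBDF4 coefficients $(a_0,\dots,a_3)=\big(\tfrac{22\alpha+3}{12},\tfrac{13-36\alpha}{12},\tfrac{18\alpha-5}{12},\tfrac{1-4\alpha}{12}\big)$, $(b_0,\dots,b_4)=(\alpha,1-\alpha,0,0,0)$, $(c_0,\dots,c_3)=(3\alpha+1,-6\alpha,4\alpha,-\alpha)$. For $\alpha\ge1$, $$\sigma_{\mathrm{F}}\ge1,\quad\sigma_{\mathrm{E}}\ge\frac{3(14\alpha+1)}{4(5\alpha-1)},\quad\lambda_{\mathrm{I}}\le\frac{3(2\alpha-1)}{4(5\alpha-1)},\quad\mathfrak{I}_{\mathrm{IE}}\le\frac{2\alpha-1}{14\alpha+1};$$ and for $\alpha\ge6/5$ all four relations hold with equality.
   Context: For coefficient vectors $(a_j)_{j=0}^{\mathrm{k}-1}$, $(b_j)_{j=0}^{\mathrm{k}}$, $(c_j)_{j=0}^{\mathrm{k}-1}$ define $a(\theta)=\sum_j a_je^{\imath j\theta}$, $b(\theta)=\sum_j b_je^{\imath j\theta}$, $c(\theta)=\sum_jc_je^{\imath j\theta}$ and $\sigma_{\mathrm{F}}=\max_{\theta\in[0,2\pi)}|1/a(\theta)|$, $\sigma_{\mathrm{E}}=\max_{\theta\in[0,2\pi)}|c(\theta)/a(\theta)|$, $\lambda_{\mathrm{I}}=\min_{\theta\in[0,2\pi)}\Re[b(\theta)/a(\theta)]$, $\mathfrak{I}_{\mathrm{IE}}=\lambda_{\mathrm{I}}/\sigma_{\mathrm{E}}$. Here $\mathrm{k}=4$. *)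

(* Defs.v *)
From Stdlib Require Import Reals List.
From Coquelicot Require Import Coquelicot.
Open Scope R_scope.

Definition eit (t : R) : C := (cos t, sin t).

Definition tpoly (cf : list R) (t : R) : C :=
  fold_right Cplus (RtoC 0)
    (map (fun j => Cmult (RtoC (nth j cf 0)) (eit (INR j * t)))
         (seq 0 (length cf))).

Definition img (f : R -> R) : R -> Prop :=
  fun x => exists t, 0 <= t < 2 * PI /\ x = f t.

(* max / min over theta in [0,2pi) taken as sup / inf in the extended reals *)
Definition sigmaF (a : list R) : Rbar :=
  Lub_Rbar (img (fun t => Cmod (Cinv (tpoly a t)))).
Definition sigmaE (a c : list R) : Rbar :=
  Lub_Rbar (img (fun t => Cmod (Cdiv (tpoly c t) (tpoly a t)))).
Definition lambdaI (a b : list R) : Rbar :=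
  Glb_Rbar (img (fun t => Re (Cdiv (tpoly b t) (tpoly a t)))).
Definition IIE (a b c : list R) : Rbar :=
  Rbar_div (lambdaI a b) (sigmaE a c).

Definition wbdf4_a (al : R) : list R :=
  (22 * al + 3) / 12 :: (13 - 36 * al) / 12 :: (18 * al - 5) / 12 :: (1 - 4 * al) / 12 :: nil.
Definition wbdf4_b (al : R) : list R := al :: 1 - al :: 0 :: 0 :: 0 :: nil.
Definition wbdf4_c (al : R) : list R := 3 * al + 1 :: - (6 * al) :: 4 * al :: - al :: nil.

(* Main.v *)
Require Import Defs.
From Stdlib Require Import Reals List Lra Psatz.
From Coquelicot Require Import Coquelicot.
Open Scope R_scope.

Definition Ar al x := (22 * al + 3) / 12 + (13 - 36 * al) / 12 * x + (18 * al - 5) / 12 * (2*x^2-1) + (1 - 4 * al) / 12 * (4*x^3-3*x).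
Definition Ai al x := (13 - 36 * al) / 12 + (18 * al - 5) / 12 * (2*x) + (1 - 4 * al) / 12 * (4*x^2-1).
Definition Br al x := al + (1 - al) * x.
Definition Bi al (x:R) := 1 - al.
Definition Cr al x := (3 * al + 1) + (- (6 * al)) * x + 4 * al * (2*x^2-1) + (- al) * (4*x^3-3*x).
Definition Ci al x := (- (6 * al)) + 4 * al * (2*x) + (- al) * (4*x^2-1).

Lemma polyA al x : 6/5 <= al -> -1 <= x <= 1 -> 1 <= Ar al x ^2 + (1 - x^2) * Ai al x ^2.
Proof.
  intros Ha Hx. unfold Ar, Ai.
  set (b := al - 6/5). replace al with (b + 6/5) by (unfold b; ring).
  assert (Hb : 0 <= b) by (unfold b; lra).
  clearbody b.
  set (u := 1 - x). set (v := 1 + x).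
  assert (Hu : 0 <= u) by (unfold u; lra). assert (Hv : 0 <= v) by (unfold v; lra).
  set (NQ := ((97/600) + (7/10)*b + (1/2)*b^2)*v^2 + ((-553/900) + (19/30)*b + (7/6)*b^2)*u*v + ((391/72) + (100/9)*b + (50/9)*b^2)*u^2).
  assert (E : forall y, y = (1 - x) * NQ + 1 -> 1 <= y).
  { intros y ->. assert (0 <= NQ).
    { unfold NQ.
      assert (0 <= (97/600)*v^2 - (553/900)*u*v + (391/72)*u^2) by nra.
      assert (0 <= b^2) by nra. assert (0 <= u*v) by nra.
      nra. }
    fold u. nra. }
  apply E. unfold NQ, u, v. field.
Qed.

Lemma polyE al x : 6/5 <= al -> -1 <= x <= 1 ->
  16 * (5*al-1)^2 * (Cr al x ^2 + (1 - x^2) * Ci al x ^2) <= 9 * (14*al+1)^2 * (Ar al x ^2 + (1 - x^2) * Ai al x ^2).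
Proof.
  intros Ha Hx. unfold Ar, Ai, Cr, Ci.
  set (b := al - 6/5). replace al with (b + 6/5) by (unfold b; ring).
  assert (Hb : 0 <= b) by (unfold b; lra).
  clearbody b.
  set (u := 1 - x). set (v := 1 + x).
  assert (Hu : 0 <= u) by (unfold u; lra). assert (Hv : 0 <= v) by (unfold v; lra).
  set (N := ((61289/200) + (4607/10)*b + (341/2)*b^2)*v^2 + ((3330843/2500) + (931841/250)*b + (227719/50)*b^2 + (13988/5)*b^3 + (682/1)*b^4)*u*v + ((4956049/5000) + (639992/125)*b + (227483/25)*b^2 + (32952/5)*b^3 + (1658/1)*b^4)*u^2).
  assert (0 <= N).
  { unfold N. assert (0 <= b^2) by nra. assert (0 <= b^3) by (apply pow_le; lra).
    assert (0 <= b^4) by (apply pow_le; lra). assert (0 <= u*v) by nra.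
    assert (0 <= u^2) by nra. assert (0 <= v^2) by nra.
    repeat apply Rplus_le_le_0_compat; apply Rmult_le_pos; try lra; try nra. }
  apply Rminus_le_0.
  replace (_ - _) with ((1 + x) * N) by (unfold N, u, v; field).
  nra.
Qed.

Lemma polyI al x : 6/5 <= al -> -1 <= x <= 1 ->
  3 * (2*al-1) * (Ar al x ^2 + (1 - x^2) * Ai al x ^2) <= 4 * (5*al-1) * (Br al x * Ar al x + (1 - x^2) * Bi al x * Ai al x).
Proof.
  intros Ha Hx. unfold Ar, Ai, Br, Bi.
  set (b := al - 6/5). replace al with (b + 6/5) by (unfold b; ring).
  assert (Hb : 0 <= b) by (unfold b; lra).
  clearbody b.
  set (u := 1 - x). set (v := 1 + x).
  assert (Hu : 0 <= u) by (unfold u; lra). assert (Hv : 0 <= v) by (unfold v; lra).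
  set (N := ((79/40) + (7/4)*b)*v^2 + ((10219/1500) + (1268/75)*b + (177/10)*b^2 + (7/1)*b^3)*u*v + ((1517/3000) + (1161/100)*b + (213/10)*b^2 + (29/3)*b^3)*u^2).
  assert (0 <= N).
  { unfold N. assert (0 <= b^2) by nra. assert (0 <= b^3) by (apply pow_le; lra).
    assert (0 <= u*v) by nra.
    assert (0 <= u^2) by nra. assert (0 <= v^2) by nra.
    repeat apply Rplus_le_le_0_compat; apply Rmult_le_pos; try lra; try nra. }
  apply Rminus_le_0.
  replace (_ - _) with ((1 + x) * N) by (unfold N, u, v; field).
  nra.
Qed.
Lemma cos2 t : cos (INR 2 * t) = 2 * cos t ^ 2 - 1.
Proof. replace (INR 2 * t) with (t + t) by (simpl; ring). rewrite cos_plus.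
  pose proof (sin2_cos2 t). unfold Rsqr in *. nra. Qed.
Lemma sin2 t : sin (INR 2 * t) = sin t * (2 * cos t).
Proof. replace (INR 2 * t) with (t + t) by (simpl; ring). rewrite sin_plus. ring. Qed.
Lemma cos3 t : cos (INR 3 * t) = 4 * cos t ^ 3 - 3 * cos t.
Proof. replace (INR 3 * t) with (INR 2 * t + t) by (simpl; ring). rewrite cos_plus, cos2, sin2.
  assert (H := sin2_cos2 t). unfold Rsqr in H. replace (sin t * (2 * cos t) * sin t) with (2 * cos t * (sin t * sin t)) by ring. replace (sin t * sin t) with (1 - cos t * cos t) by lra. ring. Qed.
Lemma sin3 t : sin (INR 3 * t) = sin t * (4 * cos t ^ 2 - 1).
Proof. replace (INR 3 * t) with (INR 2 * t + t) by (simpl; ring). rewrite sin_plus, cos2, sin2.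
  pose proof (sin2_cos2 t). unfold Rsqr in *. nra. Qed.
Lemma cos1 t : cos (INR 1 * t) = cos t. Proof. simpl; rewrite Rmult_1_l; auto. Qed.
Lemma sin1 t : sin (INR 1 * t) = sin t. Proof. simpl; rewrite Rmult_1_l; auto. Qed.
Lemma cos0' t : cos (INR 0 * t) = 1. Proof. simpl; rewrite Rmult_0_l; apply cos_0. Qed.
Lemma sin0' t : sin (INR 0 * t) = 0. Proof. simpl; rewrite Rmult_0_l; apply sin_0. Qed.

Lemma tp_a al t : tpoly (wbdf4_a al) t = (Ar al (cos t), sin t * Ai al (cos t)).
Proof.
  unfold tpoly, wbdf4_a, eit. cbn [length seq map fold_right nth].
  rewrite cos0', sin0', cos1, sin1, cos2, sin2, cos3, sin3.
  unfold Ar, Ai. apply injective_projections; simpl; ring.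
Qed.


Lemma tp_b al t : tpoly (wbdf4_b al) t = (Br al (cos t), sin t * Bi al (cos t)).
Proof.
  unfold tpoly, wbdf4_b, eit. cbn [length seq map fold_right nth].
  rewrite cos0', sin0', cos1, sin1.
  unfold Br, Bi. apply injective_projections; simpl; ring.
Qed.

Lemma tp_c al t : tpoly (wbdf4_c al) t = (Cr al (cos t), sin t * Ci al (cos t)).
Proof.
  unfold tpoly, wbdf4_c, eit. cbn [length seq map fold_right nth].
  rewrite cos0', sin0', cos1, sin1, cos2, sin2, cos3, sin3.
  unfold Cr, Ci. apply injective_projections; simpl; ring.
Qed.

Lemma Cmod_pair x y : Cmod (x, y) = sqrt (x^2 + y^2).
Proof. reflexivity. Qed.

Lemma nz_pair x y : 0 < x^2 + y^2 -> (x, y) <> RtoC 0.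
Proof. intros H E. injection E as -> ->. simpl in H. lra. Qed.

Lemma L1 x y : 1 <= x^2 + y^2 -> Cmod (Cinv (x, y)) <= 1.
Proof.
  intros H. rewrite Cmod_inv by (apply nz_pair; lra).
  rewrite Cmod_pair.
  assert (1 <= sqrt (x^2+y^2)) by (rewrite <- sqrt_1; apply sqrt_le_1_alt; lra).
  rewrite <- Rinv_1. apply Rinv_le_contravar; lra.
Qed.

Lemma L2 p q x y K : 0 < K -> 0 < x^2 + y^2 -> p^2 + q^2 <= K^2 * (x^2 + y^2) ->
  Cmod (Cdiv (p, q) (x, y)) <= K.
Proof.
  intros HK Hz H. rewrite Cmod_div by (apply nz_pair; lra).
  rewrite !Cmod_pair.
  assert (Hs : 0 < sqrt (x^2+y^2)) by (apply sqrt_lt_R0; lra).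
  apply Rle_div_l; [lra|].
  rewrite <- (sqrt_pow2 K) by lra.
  rewrite <- sqrt_mult by (try apply pow_le; lra).
  apply sqrt_le_1_alt; lra.
Qed.

Lemma L3 p q x y L : 0 < x^2 + y^2 -> L * (x^2 + y^2) <= p * x + q * y ->
  L <= Re (Cdiv (p, q) (x, y)).
Proof.
  intros Hz H. unfold Cdiv, Cinv, Cmult, Re. cbn [fst snd].
  replace (p * (x / (x ^ 2 + y ^ 2)) - q * (- y / (x ^ 2 + y ^ 2))) with ((p*x+q*y)/(x^2+y^2)) by (field; lra).
  apply Rle_div_r; lra.
Qed.

Lemma V1 x : x <> 0 -> Cmod (Cinv (x, 0)) = / Rabs x.
Proof. intros H. rewrite Cmod_inv. 2:{ intros E. injection E. auto. }
  change (x, 0) with (RtoC x). rewrite Cmod_R. auto. Qed.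

Lemma V2 p x : x <> 0 -> Cmod (Cdiv (p, 0) (x, 0)) = Rabs p / Rabs x.
Proof. intros H. rewrite Cmod_div. 2:{ intros E. injection E. auto. }
  change (x, 0) with (RtoC x). change (p, 0) with (RtoC p). rewrite !Cmod_R. auto. Qed.

Lemma V3 p x : x <> 0 -> Re (Cdiv (p, 0) (x, 0)) = p / x.
Proof. intros H. unfold Cdiv, Cinv, Cmult, Re. simpl. field. auto. Qed.

Lemma img_in (f : R -> R) t : 0 <= t < 2 * PI -> img f (f t).
Proof. intros H. exists t. auto. Qed.

Lemma lub_ge (E : R -> Prop) m : E m -> Rbar_le m (Lub_Rbar E).
Proof. intros H. destruct (Lub_Rbar_correct E) as [Hub _]. apply Hub; auto. Qed.
Lemma glb_le (E : R -> Prop) m : E m -> Rbar_le (Glb_Rbar E) m.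
Proof. intros H. destruct (Glb_Rbar_correct E) as [Hlb _]. apply Hlb; auto. Qed.
Lemma lub_eq (E : R -> Prop) m : E m -> (forall x, E x -> x <= m) -> Lub_Rbar E = Finite m.
Proof. intros H1 H2. apply is_lub_Rbar_unique. split.
  - intros x Hx. simpl. auto.
  - intros b Hb. apply Hb. auto. Qed.
Lemma glb_eq (E : R -> Prop) m : E m -> (forall x, E x -> m <= x) -> Glb_Rbar E = Finite m.
Proof. intros H1 H2. apply is_glb_Rbar_unique. split.
  - intros x Hx. simpl. auto.
  - intros b Hb. apply Hb. auto. Qed.

Lemma t0 : 0 <= 0 < 2 * PI. Proof. pose proof PI_RGT_0. lra. Qed.
Lemma tpi : 0 <= PI < 2 * PI. Proof. pose proof PI_RGT_0. lra. Qed.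

Lemma fa0 al : tpoly (wbdf4_a al) 0 = (1, 0).
Proof. rewrite tp_a, cos_0, sin_0. apply injective_projections; simpl; unfold Ar; field. Qed.
Lemma fapi al : tpoly (wbdf4_a al) PI = (4*(5*al-1)/3, 0).
Proof. rewrite tp_a, cos_PI, sin_PI. apply injective_projections; simpl; unfold Ar; field. Qed.
Lemma fbpi al : tpoly (wbdf4_b al) PI = (2*al-1, 0).
Proof. rewrite tp_b, cos_PI, sin_PI. apply injective_projections; simpl; unfold Br; field. Qed.
Lemma fcpi al : tpoly (wbdf4_c al) PI = (14*al+1, 0).
Proof. rewrite tp_c, cos_PI, sin_PI. apply injective_projections; simpl; unfold Cr; field. Qed.

Lemma sq_sin t Y : (sin t * Y)^2 = (1 - cos t ^2) * Y^2.
Proof. assert (H := sin2_cos2 t). unfold Rsqr in H.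
  replace ((sin t * Y)^2) with ((sin t * sin t) * Y^2) by ring.
  replace (sin t * sin t) with (1 - cos t * cos t) by lra. ring. Qed.

Theorem mainTheorem5 (al : R) (hal : 1 <= al) :
  (Rbar_le 1 (sigmaF (wbdf4_a al))
   /\ Rbar_le (3 * (14 * al + 1) / (4 * (5 * al - 1))) (sigmaE (wbdf4_a al) (wbdf4_c al))
   /\ Rbar_le (lambdaI (wbdf4_a al) (wbdf4_b al)) (3 * (2 * al - 1) / (4 * (5 * al - 1)))
   /\ Rbar_le (IIE (wbdf4_a al) (wbdf4_b al) (wbdf4_c al)) ((2 * al - 1) / (14 * al + 1)))
  /\ (6 / 5 <= al ->
      sigmaF (wbdf4_a al) = Finite 1
      /\ sigmaE (wbdf4_a al) (wbdf4_c al) = Finite (3 * (14 * al + 1) / (4 * (5 * al - 1)))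
      /\ lambdaI (wbdf4_a al) (wbdf4_b al) = Finite (3 * (2 * al - 1) / (4 * (5 * al - 1)))
      /\ IIE (wbdf4_a al) (wbdf4_b al) (wbdf4_c al) = Finite ((2 * al - 1) / (14 * al + 1))).
Proof.
  set (S := 3 * (14 * al + 1) / (4 * (5 * al - 1))).
  set (L := 3 * (2 * al - 1) / (4 * (5 * al - 1))).
  assert (Hden : 0 < 4 * (5 * al - 1)) by lra.
  assert (HS : 0 < S) by (unfold S; apply Rdiv_lt_0_compat; lra).
  assert (HL : 0 <= L) by (unfold L; apply Rmult_le_pos; [lra| left; apply Rinv_0_lt_compat; lra]).
  assert (HT : L / S = (2 * al - 1) / (14 * al + 1)) by (unfold L, S; field; lra).
  assert (EF0 : Cmod (Cinv (tpoly (wbdf4_a al) 0)) = 1).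
  { rewrite fa0, V1 by lra. rewrite Rabs_R1. apply Rinv_1. }
  assert (EEpi : Cmod (Cdiv (tpoly (wbdf4_c al) PI) (tpoly (wbdf4_a al) PI)) = S).
  { rewrite fcpi, fapi, V2 by lra. rewrite !Rabs_right by lra. unfold S. field. lra. }
  assert (EIpi : Re (Cdiv (tpoly (wbdf4_b al) PI) (tpoly (wbdf4_a al) PI)) = L).
  { rewrite fbpi, fapi, V3 by lra. unfold L. field. lra. }
  assert (H1 : Rbar_le 1 (sigmaF (wbdf4_a al))).
  { unfold sigmaF. rewrite <- EF0. apply lub_ge. apply (img_in (fun t => Cmod (Cinv (tpoly (wbdf4_a al) t)))). apply t0. }
  assert (H2 : Rbar_le S (sigmaE (wbdf4_a al) (wbdf4_c al))).
  { unfold sigmaE. rewrite <- EEpi. apply lub_ge.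
    apply (img_in (fun t => Cmod (Cdiv (tpoly (wbdf4_c al) t) (tpoly (wbdf4_a al) t)))). apply tpi. }
  assert (H3 : Rbar_le (lambdaI (wbdf4_a al) (wbdf4_b al)) L).
  { unfold lambdaI. rewrite <- EIpi. apply glb_le.
    apply (img_in (fun t => Re (Cdiv (tpoly (wbdf4_b al) t) (tpoly (wbdf4_a al) t)))). apply tpi. }
  assert (H4 : Rbar_le (IIE (wbdf4_a al) (wbdf4_b al) (wbdf4_c al)) ((2 * al - 1) / (14 * al + 1))).
  { unfold IIE. rewrite <- HT.
    assert (HT0 : 0 <= L / S) by (apply Rdiv_le_0_compat; lra).
    destruct (lambdaI (wbdf4_a al) (wbdf4_b al)) as [l| |]; destruct (sigmaE (wbdf4_a al) (wbdf4_c al)) as [s| |];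
      simpl in H2, H3 |- *; try contradiction.
    - assert (l * S <= L * s) by nra.
      replace (l * / s) with ((l*S) * / (s*S)) by (field; lra).
      replace (L / S) with ((L*s) * / (s*S)) by (field; lra).
      apply Rmult_le_compat_r; [left; apply Rinv_0_lt_compat; nra | lra].
    - unfold Rbar_mult, Rbar_mult'. simpl. lra.
    - unfold Rbar_mult, Rbar_mult'. destruct Rle_dec as [Hd|Hd].
      + destruct Rle_lt_or_eq_dec; simpl; auto.
      + exfalso. apply Hd. left. apply Rinv_0_lt_compat. lra.
    - unfold Rbar_mult, Rbar_mult'. destruct Rle_dec as [Hd|Hd].
      + destruct Rle_lt_or_eq_dec; simpl; auto; lra.
      + lra. }
  split; [auto|]. intros H65.
  assert (Na : forall t, 1 <= fst (tpoly (wbdf4_a al) t) ^2 + snd (tpoly (wbdf4_a al) t) ^2).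
  { intros t. rewrite tp_a. simpl fst; simpl snd. rewrite sq_sin. apply polyA; auto. apply COS_bound. }
  assert (G1 : sigmaF (wbdf4_a al) = Finite 1).
  { unfold sigmaF. apply lub_eq.
    - pose proof (img_in (fun t => Cmod (Cinv (tpoly (wbdf4_a al) t))) 0 t0) as HH. cbv beta in HH. rewrite EF0 in HH. exact HH.
    - intros x [t [_ ->]]. specialize (Na t). destruct (tpoly (wbdf4_a al) t). apply L1. auto. }
  assert (G2 : sigmaE (wbdf4_a al) (wbdf4_c al) = Finite S).
  { unfold sigmaE. apply lub_eq.
    - pose proof (img_in (fun t => Cmod (Cdiv (tpoly (wbdf4_c al) t) (tpoly (wbdf4_a al) t))) PI tpi) as HH. cbv beta in HH. rewrite EEpi in HH. exact HH.
    - intros x [t [_ ->]]. specialize (Na t). rewrite tp_a in Na. cbn [fst snd] in Na.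
      rewrite tp_a, tp_c. rewrite sq_sin in Na.
      assert (P := polyE al (cos t) H65 (COS_bound t)).
      apply L2; [lra | rewrite sq_sin; lra |].
      rewrite !sq_sin. unfold S.
      set (X := Ar al (cos t) ^ 2 + (1 - cos t ^ 2) * Ai al (cos t) ^ 2) in *.
      set (Y := Cr al (cos t) ^ 2 + (1 - cos t ^ 2) * Ci al (cos t) ^ 2) in *.
      replace ((3 * (14 * al + 1) / (4 * (5 * al - 1))) ^ 2 * X) with ((9 * (14*al+1)^2 * X) / (16 * (5*al-1)^2)) by (field; lra).
      apply Rle_div_r; [nra | lra]. }
  assert (G3 : lambdaI (wbdf4_a al) (wbdf4_b al) = Finite L).
  { unfold lambdaI. apply glb_eq.
    - pose proof (img_in (fun t => Re (Cdiv (tpoly (wbdf4_b al) t) (tpoly (wbdf4_a al) t))) PI tpi) as HH. cbv beta in HH. rewrite EIpi in HH. exact HH.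
    - intros x [t [_ ->]]. specialize (Na t). rewrite tp_a in Na. cbn [fst snd] in Na.
      rewrite tp_a, tp_b. rewrite sq_sin in Na.
      assert (P := polyI al (cos t) H65 (COS_bound t)).
      apply L3; [rewrite sq_sin; lra |].
      rewrite sq_sin. unfold L.
      replace (sin t * Bi al (cos t) * (sin t * Ai al (cos t))) with ((sin t)^2 * Bi al (cos t) * Ai al (cos t)) by ring.
      replace ((sin t)^2) with (1 - cos t ^ 2) by (pose proof (sin2_cos2 t); unfold Rsqr in *; nra).
      set (X := Ar al (cos t) ^ 2 + (1 - cos t ^ 2) * Ai al (cos t) ^ 2) in *.
      replace (3 * (2 * al - 1) / (4 * (5 * al - 1)) * X) with ((3 * (2*al-1) * X) / (4 * (5*al-1))) by (field; lra).
      apply Rle_div_l; [lra | lra]. }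
  split; [exact G1|]. split; [exact G2|]. split; [exact G3|].
  unfold IIE. rewrite G2, G3. simpl. f_equal. rewrite <- HT. reflexivity.
Qed.
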